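(* If a Banach space $X$ has the join-lush property, then $n_L(X)=1$.
   Context: $X$ is a Banach space over $\mathbb{K}=\mathbb{R}$ or $\mathbb{C}$, $\mathbb{T}=\{\alpha\in\mathbb{K}:|\alpha|=1\}$. For $y^*\in S_{X^*}$ and $\varepsilon>0$, $S(y^*,\varepsilon)=\{z\in B_X:\operatorname{Re}y^*(z)>1-\varepsilon\}$. $X$ has the join-lush property if for each $x,y\in S_X$ and $\varepsilon>0$ there exist $y^*\in S_{X^*}$ with $y\in S=S(y^*,\varepsilon)$, $x_1,x_2\in S$, $\lambda\in[0,1]$ and $\alpha_1,\alpha_2\in\mathbb{T}$ such that $\|x-(\lambda\alpha_1x_1+(1-\lambda)\alpha_2x_2)\|<\varepsilon$. $\mathrm{Lip}_0(X)$ is the set of Lipschitz maps $T:X\to X$ with $T(0)=0$, with $\|T\|_L=\sup\{\|Tx-Ty\|/\|x-y\|: x\neq y\}$; $D(x)=\{x^*\in X^*: x^*(x)=\|x^*\|\|x\|=\|x\|^2\}$; $\omega(T)=\sup\{|f(Tx-Ty)|/\|x-y\|^2: x\neq y,\ f\in D(x-y)\}$; $n_L(X)=\inf\{\omega(T): T\in\mathrm{Lip}_0(X),\ \|T\|_L=1\}$. *)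

(* Defs.v *)
From Stdlib Require Import Reals Lra.
Open Scope R_scope.

Record Cx := mkC { re : R; im : R }.
Definition RtoC (r : R) : Cx := mkC r 0.
Definition C0 : Cx := RtoC 0.
Definition C1 : Cx := RtoC 1.
Definition Cadd (a b : Cx) : Cx := mkC (re a + re b) (im a + im b).
Definition Cmul (a b : Cx) : Cx :=
  mkC (re a * re b - im a * im b) (re a * im b + im a * re b).
Definition Cabs (a : Cx) : R := sqrt (re a * re a + im a * im a).

Inductive field_kind := RealK | ComplexK.

Definition inK (k : field_kind) (z : Cx) : Prop :=
  match k with RealK => im z = 0 | ComplexK => True end.

Definition inT (k : field_kind) (z : Cx) : Prop := inK k z /\ Cabs z = 1.

(** * Banach spaces over K.  The scalar action is only constrained on
   scalars in K (values on other scalars are irrelevant and never used). *)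
Record Banach (k : field_kind) := {
  vec :> Type;
  vadd : vec -> vec -> vec;
  vzero : vec;
  vopp : vec -> vec;
  scal : Cx -> vec -> vec;
  norm : vec -> R;
  vadd_assoc : forall x y z, vadd x (vadd y z) = vadd (vadd x y) z;
  vadd_comm : forall x y, vadd x y = vadd y x;
  vadd_0 : forall x, vadd x vzero = x;
  vadd_opp : forall x, vadd x (vopp x) = vzero;
  scal_addv : forall a x y, inK k a -> scal a (vadd x y) = vadd (scal a x) (scal a y);
  scal_adds : forall a b x, inK k a -> inK k b ->
     scal (Cadd a b) x = vadd (scal a x) (scal b x);
  scal_mul : forall a b x, inK k a -> inK k b -> scal (Cmul a b) x = scal a (scal b x);
  scal_1 : forall x, scal C1 x = x;
  norm_nonneg : forall x, 0 <= norm x;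
  norm_eq0 : forall x, norm x = 0 -> x = vzero;
  norm_scal : forall a x, inK k a -> norm (scal a x) = Cabs a * norm x;
  norm_triangle : forall x y, norm (vadd x y) <= norm x + norm y;
  complete : forall u : nat -> vec,
     (forall eps, 0 < eps -> exists N, forall n m, (N <= n)%nat -> (N <= m)%nat ->
         norm (vadd (u n) (vopp (u m))) < eps) ->
     exists l, forall eps, 0 < eps -> exists N, forall n, (N <= n)%nat ->
         norm (vadd (u n) (vopp l)) < eps
}.

Arguments vadd {k X} : rename.
Arguments vzero {k} X : rename.
Arguments vopp {k X} : rename.
Arguments scal {k X} : rename.
Arguments norm {k X} : rename.

Section Defs.
Context {k : field_kind} {X : Banach k}.

Definition vsub (x y : X) : X := vadd x (vopp y).

Definition inSX (x : X) : Prop := norm x = 1.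

Definition is_dual (f : X -> Cx) : Prop :=
  (forall x, inK k (f x)) /\
  (forall x y, f (vadd x y) = Cadd (f x) (f y)) /\
  (forall a x, inK k a -> f (scal a x) = Cmul a (f x)) /\
  (exists M, forall x, Cabs (f x) <= M * norm x).

Definition dual_norm (f : X -> Cx) (c : R) : Prop :=
  is_lub (fun r => exists x : X, norm x <= 1 /\ r = Cabs (f x)) c.

Definition inSXs (f : X -> Cx) : Prop := is_dual f /\ dual_norm f 1.

Definition inSlice (f : X -> Cx) (eps : R) (z : X) : Prop :=
  norm z <= 1 /\ re (f z) > 1 - eps.

Definition join_lush : Prop :=
  forall x y : X, inSX x -> inSX y -> forall eps, 0 < eps ->
  exists ys : X -> Cx, inSXs ys /\ inSlice ys eps y /\
  exists (x1 x2 : X) (lam : R) (a1 a2 : Cx),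
    inSlice ys eps x1 /\ inSlice ys eps x2 /\ 0 <= lam <= 1 /\
    inT k a1 /\ inT k a2 /\
    norm (vsub x (vadd (scal (RtoC lam) (scal a1 x1))
                       (scal (RtoC (1 - lam)) (scal a2 x2)))) < eps.

Definition inD (x : X) (f : X -> Cx) : Prop :=
  is_dual f /\ exists c, dual_norm f c /\
    f x = RtoC (c * norm x) /\ c * norm x = norm x ^ 2.

Definition lip_norm (T : X -> X) (L : R) : Prop :=
  is_lub (fun r => exists x y : X, x <> y /\
            r = norm (vsub (T x) (T y)) / norm (vsub x y)) L.

Definition omega (T : X -> X) (w : R) : Prop :=
  is_lub (fun r => exists (x y : X) (f : X -> Cx), x <> y /\ inD (vsub x y) f /\
            r = Cabs (f (vsub (T x) (T y))) / (norm (vsub x y)) ^ 2) w.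

Definition is_lower_bound (E : R -> Prop) (m : R) : Prop := forall x, E x -> m <= x.
Definition is_glb (E : R -> Prop) (m : R) : Prop :=
  is_lower_bound E m /\ forall b, is_lower_bound E b -> b <= m.

Definition nL (v : R) : Prop :=
  is_glb (fun w => exists T : X -> X, T (vzero X) = vzero X /\ lip_norm T 1 /\ omega T w) v.

End Defs.
Arguments join_lush {k} X.
Arguments nL {k} X v.

(* Main.v *)
Require Import Defs.
From Stdlib Require Import Reals.
Open Scope R_scope.
From Stdlib Require Import Lra Psatz ClassicalEpsilon Classical.


Lemma mkC_eq a b c d : a = c -> b = d -> mkC a b = mkC c d.
Proof. intros; subst; reflexivity. Qed.

Lemma inK_RtoC k r : inK k (RtoC r).
Proof. destruct k; simpl; auto. Qed.

Arguments vadd_assoc {k b0}. Arguments vadd_comm {k b0}. Arguments vadd_0 {k b0}.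
Arguments vadd_opp {k b0}. Arguments scal_addv {k b0}. Arguments scal_adds {k b0}.
Arguments scal_mul {k b0}. Arguments scal_1 {k b0}. Arguments norm_nonneg {k b0}.
Arguments norm_eq0 {k b0}. Arguments norm_scal {k b0}. Arguments norm_triangle {k b0}.
Arguments complete {k b0}.

Section Vec.
Context {k : field_kind} {X : Banach k}.

Definition sc (r : R) (x : X) : X := scal (RtoC r) x.

Lemma vadd_0l (x : X) : vadd (vzero X) x = x.
Proof. rewrite vadd_comm. apply vadd_0. Qed.

Lemma vadd_oppl (x : X) : vadd (vopp x) x = vzero X.
Proof. rewrite vadd_comm. apply vadd_opp. Qed.

Lemma vadd_cancel (a x y : X) : vadd a x = vadd a y -> x = y.
Proof.
  intro H. assert (vadd (vopp a) (vadd a x) = vadd (vopp a) (vadd a y)) by (rewrite H; auto).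
  rewrite !vadd_assoc, vadd_oppl, !vadd_0l in H0. auto.
Qed.

Lemma vopp_unique (x y : X) : vadd x y = vzero X -> y = vopp x.
Proof. intro H. apply (vadd_cancel x). rewrite H, vadd_opp. auto. Qed.

Lemma vopp_opp (x : X) : vopp (vopp x) = x.
Proof. symmetry. apply vopp_unique. apply vadd_oppl. Qed.

Lemma vopp_add (x y : X) : vopp (vadd x y) = vadd (vopp x) (vopp y).
Proof.
  symmetry. apply vopp_unique.
  rewrite (vadd_comm (vopp x)), vadd_assoc, <- (vadd_assoc x), vadd_opp, vadd_0, vadd_opp. auto.
Qed.

Lemma vopp_zero : vopp (vzero X) = vzero X.
Proof. symmetry. apply vopp_unique. apply vadd_0. Qed.

Lemma sc_add r s (x : X) : sc (r + s) x = vadd (sc r x) (sc s x).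
Proof.
  unfold sc. rewrite <- scal_adds by apply inK_RtoC. f_equal.
  unfold Cadd, RtoC; simpl. apply mkC_eq; ring.
Qed.

Lemma sc_mul r s (x : X) : sc r (sc s x) = sc (r * s) x.
Proof.
  unfold sc. rewrite <- scal_mul by apply inK_RtoC. f_equal.
  unfold Cmul, RtoC; simpl. apply mkC_eq; ring.
Qed.

Lemma sc_1 (x : X) : sc 1 x = x.
Proof. apply scal_1. Qed.

Lemma sc_0 (x : X) : sc 0 x = vzero X.
Proof.
  apply (vadd_cancel (sc 0 x)). rewrite <- sc_add, vadd_0. f_equal. ring.
Qed.

Lemma sc_addv r (x y : X) : sc r (vadd x y) = vadd (sc r x) (sc r y).
Proof. apply scal_addv, inK_RtoC. Qed.

Lemma sc_zero r : sc r (vzero X) = vzero X.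
Proof.
  apply (vadd_cancel (sc r (vzero X))). rewrite <- sc_addv, !vadd_0. auto.
Qed.

Lemma sc_opp r (x : X) : sc (- r) x = vopp (sc r x).
Proof. apply vopp_unique. rewrite <- sc_add. replace (r + - r) with 0 by ring. apply sc_0. Qed.

Lemma sc_oppv r (x : X) : sc r (vopp x) = vopp (sc r x).
Proof. apply vopp_unique. rewrite <- sc_addv, vadd_opp. apply sc_zero. Qed.

Lemma vopp_sc (x : X) : vopp x = sc (-1) x.
Proof. replace (-1) with (-(1)) by ring. rewrite sc_opp, sc_1. auto. Qed.

Lemma norm_zero : norm (vzero X) = 0.
Proof. rewrite <- (sc_0 (vzero X)). unfold sc. rewrite norm_scal by apply inK_RtoC.
  unfold Cabs, RtoC; simpl. replace (0*0+0*0) with 0 by ring. rewrite sqrt_0. ring. Qed.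

Lemma Cabs_RtoC r : Cabs (RtoC r) = Rabs r.
Proof. unfold Cabs, RtoC; simpl. replace (r * r + 0 * 0) with (Rsqr r) by (unfold Rsqr; ring).
  apply sqrt_Rsqr_abs. Qed.

Lemma norm_sc r (x : X) : norm (sc r x) = Rabs r * norm x.
Proof. unfold sc. rewrite norm_scal by apply inK_RtoC. rewrite Cabs_RtoC. auto. Qed.

Lemma norm_opp (x : X) : norm (vopp x) = norm x.
Proof. rewrite vopp_sc, norm_sc. unfold Rabs; destruct Rcase_abs; lra. Qed.

Lemma vsub_self (x : X) : vsub x x = vzero X.
Proof. apply vadd_opp. Qed.

Lemma vsub_0 (x : X) : vsub x (vzero X) = x.
Proof. unfold vsub. rewrite vopp_zero. apply vadd_0. Qed.

Lemma vsub_eq0 (x y : X) : vsub x y = vzero X -> x = y.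
Proof. unfold vsub. intro H. apply vopp_unique in H. rewrite <- (vopp_opp x), <- H, vopp_opp. auto. Qed.

Lemma vsub_addl (a w : X) : vsub (vadd a w) a = w.
Proof. unfold vsub. rewrite (vadd_comm a), <- vadd_assoc, vadd_opp, vadd_0. auto. Qed.

Lemma vsub_chain (a b c : X) : vsub c a = vadd (vsub c b) (vsub b a).
Proof. unfold vsub. rewrite <- vadd_assoc, (vadd_assoc (vopp b)), vadd_oppl, vadd_0l. auto. Qed.

Lemma vsub_addcancel (v a b : X) : vsub (vadd v a) (vadd v b) = vsub a b.
Proof. unfold vsub. rewrite vopp_add, (vadd_comm v a), <- vadd_assoc, (vadd_assoc v), vadd_opp, vadd_0l. auto. Qed.

Lemma vsub_opp (x y : X) : vopp (vsub x y) = vsub y x.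
Proof. unfold vsub. rewrite vopp_add, vopp_opp, vadd_comm. auto. Qed.

Lemma norm_sub_sym (x y : X) : norm (vsub x y) = norm (vsub y x).
Proof. rewrite <- vsub_opp, norm_opp. auto. Qed.

Lemma sc_sub r (x y : X) : sc r (vsub x y) = vsub (sc r x) (sc r y).
Proof. unfold vsub. rewrite sc_addv, sc_oppv. auto. Qed.

Lemma vsub_sc r s (x : X) : vsub (sc r x) (sc s x) = sc (r - s) x.
Proof. unfold vsub, Rminus. rewrite sc_add, sc_opp. auto. Qed.

Lemma norm_tri_sub (x y z : X) : norm (vsub x z) <= norm (vsub x y) + norm (vsub y z).
Proof. rewrite (vsub_chain z y x). apply norm_triangle. Qed.

Lemma vadd_sub (a w : X) : vadd a (vsub w a) = w.
Proof. unfold vsub. rewrite (vadd_comm w), vadd_assoc, vadd_opp, vadd_0l. auto. Qed.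

Lemma vsub_add2 (x y z w : X) : vsub (vadd x y) (vadd z w) = vadd (vsub x z) (vsub y w).
Proof. unfold vsub. rewrite vopp_add. rewrite <- !vadd_assoc. f_equal.
  rewrite (vadd_comm y), <- vadd_assoc. f_equal. apply vadd_comm. Qed.

Lemma norm_pos (x : X) : x <> vzero X -> 0 < norm x.
Proof. intro H. destruct (norm_nonneg x); auto. exfalso. apply H, norm_eq0. auto. Qed.

End Vec.


Module ZornM.
From mathcomp Require Import ssreflect ssrbool boolp classical_sets.
Lemma zorn_prop (T : Type) (t0 : T) (Rl : T -> T -> Prop) :
  (forall t, Rl t t) -> (forall r s t, Rl r s -> Rl s t -> Rl r t) ->
  (forall A : T -> Prop, (forall s t, A s -> A t -> Rl s t \/ Rl t s) ->
      exists t, forall s, A s -> Rl s t) ->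
  exists t, forall s, Rl t s -> Rl s t.
Proof.
move=> Hr Ht Hc.
have H1 : forall t, `[< Rl t t >] by move=> t; apply/asboolP.
have H2 : forall r s t, `[< Rl r s >] -> `[< Rl s t >] -> `[< Rl r t >].
  by move=> r s t /asboolP a /asboolP b; apply/asboolP; exact: Ht a b.
have H3 : forall A, total_on A (fun s t => `[< Rl s t >]) -> exists t, forall s, A s -> `[< Rl s t >].
  move=> A HA. have [t Ht'] : exists t, forall s, A s -> Rl s t.
    apply: Hc => s t As At. by case: (HA s t As At) => /asboolP H; [left|right].
  by exists t => s As; apply/asboolP; apply: Ht'.
have [z Hz] := @ZL_preorder T t0 (fun s t => `[< Rl s t >]) H1 H2 H3.
by exists z => s H; apply/asboolP; apply: Hz; apply/asboolP.
Qed.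
End ZornM.

Definition isglbR (E : R -> Prop) (m : R) :=
  (forall e, E e -> m <= e) /\ (forall b, (forall e, E e -> b <= e) -> b <= m).

Lemma glb_exists (E : R -> Prop) : (exists e, E e) -> (exists b, forall e, E e -> b <= e) ->
  exists m, isglbR E m.
Proof.
  intros [e He] [b Hb].
  destruct (completeness (fun r => E (- r))) as [l [Hl1 Hl2]].
  - exists (- b). intros r Hr. apply Hb in Hr. lra.
  - exists (- e). rewrite Ropp_involutive. auto.
  - exists (- l). split.
    + intros e' He'. assert (- e' <= l). { apply Hl1. rewrite Ropp_involutive. auto. } lra.
    + intros b' Hb'. assert (l <= - b'). { apply Hl2. intros r Hr. apply Hb' in Hr. lra. } lra.
Qed.

Definition Rinf (E : R -> Prop) : R :=
  match excluded_middle_informative (exists m, isglbR E m) with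
  | left H => proj1_sig (constructive_indefinite_description _ H)
  | right _ => 0 end.

Lemma Rinf_spec E : (exists e, E e) -> (exists b, forall e, E e -> b <= e) -> isglbR E (Rinf E).
Proof.
  intros H1 H2. pose proof (glb_exists E H1 H2) as H. unfold Rinf.
  destruct (excluded_middle_informative _) as [H'|H']; [|contradiction].
  apply (proj2_sig (constructive_indefinite_description _ H')).
Qed.

Section HB.
Context {k : field_kind} {X : Banach k}.

Definition sublin (p : X -> R) :=
  (forall x y, p (vadd x y) <= p x + p y) /\ (forall r x, 0 <= r -> p (sc r x) = r * p x).

Lemma sublin_0 p : sublin p -> p (vzero X) = 0.
Proof. intros [_ H]. rewrite <- (sc_0 (vzero X)). rewrite H by lra. ring. Qed.

Lemma sublin_opp p x : sublin p -> - p (vopp x) <= p x.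
Proof. intros Hp. pose proof (sublin_0 p Hp). destruct Hp as [H1 _].
  specialize (H1 x (vopp x)). rewrite vadd_opp in H1. lra. Qed.

Lemma vadd_swap4 (a b c d : X) : vadd (vadd a b) (vadd c d) = vadd (vadd a c) (vadd b d).
Proof. rewrite <- !vadd_assoc. f_equal. rewrite !vadd_assoc. f_equal. apply vadd_comm. Qed.

Lemma vadd_addopp (w c : X) : vadd (vadd w c) (vopp w) = c.
Proof. rewrite (vadd_comm w), <- vadd_assoc, vadd_opp, vadd_0. auto. Qed.

Section GIL.
Variables (p : X -> R) (C : X -> Prop) (l : X -> R).
Hypotheses (Hp : sublin p) (C0 : C (vzero X)) (Cadd : forall a b, C a -> C b -> C (vadd a b))
  (Csc : forall r a, 0 <= r -> C a -> C (sc r a))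
  (ladd : forall a b, C a -> C b -> l (vadd a b) = l a + l b)
  (lsc : forall r a, 0 <= r -> C a -> l (sc r a) = r * l a)
  (lp : forall a, C a -> l a <= p a).

Definition qinf (w : X) := Rinf (fun e => exists c, C c /\ e = p (vadd w c) - l c).

Lemma l0 : l (vzero X) = 0.
Proof. rewrite <- (sc_0 (vzero X)). rewrite lsc by (auto; lra). ring. Qed.

Lemma qinf_spec w : isglbR (fun e => exists c, C c /\ e = p (vadd w c) - l c) (qinf w).
Proof.
  apply Rinf_spec.
  - exists (p (vadd w (vzero X)) - l (vzero X)). eauto.
  - exists (- p (vopp w)). intros e [c [Hc ->]].
    pose proof (lp c Hc). destruct Hp as [Ha _]. specialize (Ha (vadd w c) (vopp w)).
    rewrite vadd_addopp in Ha. lra.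
Qed.

Lemma qinf_le w c : C c -> qinf w <= p (vadd w c) - l c.
Proof. intro Hc. apply (proj1 (qinf_spec w)). eauto. Qed.

Lemma qinf_ge w : - p (vopp w) <= qinf w.
Proof.
  apply (proj2 (qinf_spec w)). intros e [c [Hc ->]].
  pose proof (lp c Hc). destruct Hp as [Ha _]. specialize (Ha (vadd w c) (vopp w)).
  rewrite vadd_addopp in Ha. lra.
Qed.

Lemma qinf_lep w : qinf w <= p w.
Proof. pose proof (qinf_le w _ C0). rewrite vadd_0, l0 in H. lra. Qed.

Lemma qinf_opp c : C c -> qinf (vopp c) <= - l c.
Proof. intro Hc. pose proof (qinf_le (vopp c) c Hc). rewrite vadd_oppl, (sublin_0 p Hp) in H. lra. Qed.

Lemma qinf_sublin : sublin qinf.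
Proof.
  split.
  - intros w1 w2.
    assert (H: forall c2, C c2 -> qinf (vadd w1 w2) - (p (vadd w2 c2) - l c2) <= qinf w1).
    { intros c2 Hc2. apply (proj2 (qinf_spec w1)). intros e [c1 [Hc1 ->]].
      pose proof (qinf_le (vadd w1 w2) (vadd c1 c2) (Cadd _ _ Hc1 Hc2)).
      rewrite vadd_swap4, ladd in H by auto. destruct Hp as [Ha _].
      pose proof (Ha (vadd w1 c1) (vadd w2 c2)). lra. }
    assert (qinf (vadd w1 w2) - qinf w1 <= qinf w2).
    { apply (proj2 (qinf_spec w2)). intros e [c2 [Hc2 ->]]. pose proof (H c2 Hc2). lra. }
    lra.
  - intros r w Hr. destruct (Req_dec r 0) as [->|Hr0].
    + rewrite sc_0. apply Rle_antisym.
      * pose proof qinf_lep (vzero X). rewrite (sublin_0 p Hp) in H. lra.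
      * pose proof qinf_ge (vzero X). rewrite vopp_zero, (sublin_0 p Hp) in H. lra.
    + assert (Hr' : 0 < r) by lra. apply Rle_antisym.
      * assert (qinf (sc r w) / r <= qinf w).
        { apply (proj2 (qinf_spec w)). intros e [c [Hc ->]].
          pose proof (qinf_le (sc r w) (sc r c) (Csc r c Hr Hc)).
          rewrite <- sc_addv, (proj2 Hp) , lsc in H by auto.
          apply (Rmult_le_reg_l r); auto. field_simplify; lra. }
        apply (Rmult_le_compat_l r) in H; [|lra]. field_simplify in H; lra.
      * assert (qinf w <= qinf (sc r w) / r).
        { apply (Rmult_le_reg_l r); auto. field_simplify; [|lra].
          apply (proj2 (qinf_spec (sc r w))). intros e [c [Hc ->]].
          assert (Hc' : C (sc (/ r) c)) by (apply Csc; auto; left; apply Rinv_0_lt_compat; auto).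
          pose proof (qinf_le w _ Hc').
          replace (vadd (sc r w) c) with (sc r (vadd w (sc (/ r) c))) by
            (rewrite sc_addv, sc_mul; replace (r * / r) with 1 by (field; lra); rewrite sc_1; auto).
          rewrite (proj2 Hp) by lra. rewrite lsc in H by (auto; left; apply Rinv_0_lt_compat; auto).
          replace (l c) with (r * (/ r * l c)) by (field; lra). 
          apply Rmult_le_compat_l with (r := r) in H; lra. }
        apply (Rmult_le_compat_l r) in H; [|lra]. field_simplify in H; lra.
Qed.

End GIL.

Definition ray (y : X) (w : X) := exists t, 0 <= t /\ w = sc t y.

Lemma ray_props (q : X -> R) (y : X) : sublin q ->
  ray y (vzero X) /\ (forall a b, ray y a -> ray y b -> ray y (vadd a b)) /\
  (forall r a, 0 <= r -> ray y a -> ray y (sc r a)) /\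
  (forall a b, ray y a -> ray y b -> q (vadd a b) = q a + q b) /\
  (forall r a, 0 <= r -> ray y a -> q (sc r a) = r * q a) /\
  (forall a, ray y a -> q a <= q a).
Proof.
  intros Hq. repeat split.
  - exists 0. rewrite sc_0. split; auto; lra.
  - intros a b [t [Ht ->]] [t' [Ht' ->]]. exists (t + t'). rewrite sc_add. split; auto; lra.
  - intros r a Hr [t [Ht ->]]. exists (r * t). rewrite sc_mul. split; auto. nra.
  - intros a b [t [Ht ->]] [t' [Ht' ->]]. rewrite <- sc_add, !(proj2 Hq) by lra. ring.
  - intros r a Hr _. apply (proj2 Hq); auto.
  - intros; lra.
Qed.

Theorem hahn_banach (p : X -> R) (x0 : X) : sublin p ->
  exists f : X -> R, (forall x y, f (vadd x y) = f x + f y) /\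
    (forall r x, f (sc r x) = r * f x) /\ (forall x, f x <= p x) /\ f x0 = p x0.
Proof.
  intros Hp.
  set (P := fun q : X -> R => sublin q /\ (forall x, q x <= p x) /\ q (vopp x0) <= - p x0).
  set (T := {q : X -> R | P q}).
  destruct (ray_props p x0 Hp) as [R0 [R1 [R2 [R3 [R4 R5]]]]].
  assert (P0 : P (qinf p (ray x0) p)).
  { split; [apply qinf_sublin; auto|]. split.
    - intro x. apply qinf_lep; auto.
    - apply qinf_opp; auto. exists 1. rewrite sc_1. split; auto; lra. }
  set (t0 := exist P _ P0 : T).
  set (Rl := fun s t : T => forall x, proj1_sig t x <= proj1_sig s x).
  destruct (ZornM.zorn_prop T t0 Rl) as [[q Pq] Hmax].
  - intros t x. lra.
  - intros r s t H1 H2 x. specialize (H1 x). specialize (H2 x). lra.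
  - intros A HA. destruct (classic (exists s, A s)) as [[s0 As0]|Hne].
    2:{ exists t0. intros s As. exfalso. apply Hne. eauto. }
    set (m := fun x => Rinf (fun e => exists s, A s /\ e = proj1_sig s x)).
    assert (Hm : forall x, isglbR (fun e => exists s, A s /\ e = proj1_sig s x) (m x)).
    { intro x. apply Rinf_spec. eauto. exists (- p (vopp x)). intros e [[s Ps] [_ ->]].
      simpl. destruct Ps as [Hs [Hsp _]]. pose proof (sublin_opp s x Hs).
      specialize (Hsp (vopp x)). lra. }
    assert (Pm : P m).
    { idtac.
      split; [split|split].
      - intros x y.
        assert (forall s2, A s2 -> m (vadd x y) - proj1_sig s2 y <= m x).
        { intros s2 As2. apply (proj2 (Hm x)). intros e [s1 [As1 ->]].
          assert (Hle : forall s, A s -> m (vadd x y) <= proj1_sig s (vadd x y))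
            by (intros s As; apply (proj1 (Hm _)); eauto).
          destruct (HA s1 s2 As1 As2) as [H|H].
          - pose proof (Hle s2 As2). destruct s2 as [g2 Pg2]; simpl in *; destruct Pg2 as [[Ha ?] ?].
            pose proof (Ha x y). specialize (H x); simpl in H; lra.
          - pose proof (Hle s1 As1). destruct s1 as [g1 Pg1]; simpl in *; destruct Pg1 as [[Ha ?] ?].
            pose proof (Ha x y). specialize (H y); simpl in H; lra. }
        assert (m (vadd x y) - m x <= m y).
        { apply (proj2 (Hm y)). intros e [s2 [As2 ->]]. pose proof (H s2 As2). lra. }
        lra.
      - intros r x Hr. destruct (Req_dec r 0) as [->|Hr0].
        + rewrite sc_0. apply Rle_antisym.
          * apply (proj1 (Hm _)). exists s0. split; auto.
            destruct s0 as [g0 Pg0]; try (simpl in H); simpl; destruct Pg0 as [Hs0 ?]. rewrite (sublin_0 g0 Hs0). lra.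
          * apply (proj2 (Hm _)). intros e [[s Ps] [_ ->]]. simpl.
            rewrite (sublin_0 s (proj1 Ps)). lra.
        + apply Rle_antisym.
          * assert (m (sc r x) / r <= m x).
            { apply (proj2 (Hm x)). intros e [s [As ->]].
              assert (m (sc r x) <= proj1_sig s (sc r x)) by (apply (proj1 (Hm _)); eauto).
              destruct s as [g Pg]; try (simpl in H); simpl; destruct Pg as [[? Hh] ?]. rewrite Hh in H by auto.
              apply (Rmult_le_reg_l r); [lra|]. field_simplify; lra. }
            apply (Rmult_le_compat_l r) in H; [|lra]. field_simplify in H; lra.
          * assert (m x <= m (sc r x) / r).
            { apply (Rmult_le_reg_l r); [lra|]. field_simplify; [|lra].
              apply (proj2 (Hm _)). intros e [s [As ->]].
              assert (m x <= proj1_sig s x) by (apply (proj1 (Hm _)); eauto).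
              destruct s as [g Pg]; try (simpl in H); simpl; destruct Pg as [[? Hh] ?]. rewrite Hh by auto. nra. }
            apply (Rmult_le_compat_l r) in H; [|lra]. field_simplify in H; lra.
      - intro x. assert (m x <= proj1_sig s0 x) by (apply (proj1 (Hm _)); eauto).
        destruct s0 as [g0 Pg0]; try (simpl in H); simpl; destruct Pg0 as [? [Hs ?]]. pose proof (Hs x). lra.
      - assert (m (vopp x0) <= proj1_sig s0 (vopp x0)) by (apply (proj1 (Hm _)); eauto).
        destruct s0 as [g0 Pg0]; try (simpl in H); simpl; destruct Pg0 as [? [? Hs]]. lra. }
    exists (exist P m Pm). intros s As x. simpl. apply (proj1 (Hm x)). eauto.
  -
    destruct Pq as [Hq [Hqp Hqx]].
    assert (Hodd : forall y, q (vopp y) = - q y).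
    { intro y. destruct (ray_props q y Hq) as [Q0 [Q1 [Q2 [Q3 [Q4 Q5]]]]].
      set (qy := qinf q (ray y) q).
      assert (Pqy : P qy).
      { split; [apply qinf_sublin; auto|]. split.
        - intro x. assert (qy x <= q x) by (unfold qy; apply qinf_lep; auto). pose proof (Hqp x). lra.
        - assert (qy (vopp x0) <= q (vopp x0)) by (unfold qy; apply qinf_lep; auto). lra. }
      assert (H := Hmax (exist P qy Pqy)). simpl in H.
      assert (H' : forall x, q x <= qy x).
      { apply H. intro x. apply qinf_lep; auto. }
      pose proof (H' (vopp y)).
      assert (ray y y) by (exists 1; rewrite sc_1; split; auto; lra).
      assert (H2 : qy (vopp y) <= - q y) by (unfold qy; apply qinf_opp; auto). pose proof (sublin_opp q y Hq). lra. }
    exists q. split; [|split; [|split]].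
    + intros x y. apply Rle_antisym; [apply (proj1 Hq)|].
      pose proof (proj1 Hq (vopp x) (vopp y)). rewrite <- vopp_add, !Hodd in H. lra.
    + intros r x. destruct (Rle_dec 0 r). apply (proj2 Hq); auto.
      replace r with (- (- r)) by ring. rewrite sc_opp, Hodd, (proj2 Hq) by lra. ring.
    + auto.
    + apply Rle_antisym; auto. pose proof Hqx as Hqx'. rewrite Hodd in Hqx'. lra.
Qed.

End HB.


Lemma le_eps (a b : R) : (forall e, 0 < e -> a <= b + e) -> a <= b.
Proof. intro H. destruct (Rle_dec a b); auto. specialize (H ((a - b)/2)). lra. Qed.

Definition Ci : Cx := mkC 0 1.
Definition conjC (a : Cx) : Cx := mkC (re a) (- im a).

Lemma Cabs_nonneg z : 0 <= Cabs z.
Proof. apply sqrt_pos. Qed.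

Lemma Cabs_sq z : Cabs z * Cabs z = re z * re z + im z * im z.
Proof. unfold Cabs. apply sqrt_sqrt. nra. Qed.

Lemma re_le_Cabs z : Rabs (re z) <= Cabs z.
Proof.
  pose proof (Cabs_sq z). pose proof (Cabs_nonneg z).
  unfold Rabs; destruct Rcase_abs; nra.
Qed.

Lemma re_le_Cabs' z : re z <= Cabs z.
Proof. pose proof (re_le_Cabs z). pose proof (Rle_abs (re z)). lra. Qed.

Lemma Cabs_mul a b : Cabs (Cmul a b) = Cabs a * Cabs b.
Proof.
  unfold Cabs, Cmul; simpl. rewrite <- sqrt_mult by nra. f_equal. ring.
Qed.

Lemma Cabs_conj a : Cabs (conjC a) = Cabs a.
Proof. unfold Cabs, conjC; simpl. f_equal. ring. Qed.

Lemma Cabs_le_re_im0 z : Cabs z <= re z -> im z = 0.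
Proof.
  intro H. pose proof (Cabs_sq z). pose proof (Cabs_nonneg z).
  assert (re z * re z + im z * im z <= re z * re z) by nra. nra.
Qed.

Lemma Cabs_eq1 a : Cabs a = 1 -> re a * re a + im a * im a = 1.
Proof. intro H. rewrite <- Cabs_sq, H. ring. Qed.

Lemma Cx_eta (z : Cx) : z = mkC (re z) (im z).
Proof. destruct z; reflexivity. Qed.

Definition isC (k : field_kind) : bool := match k with RealK => false | ComplexK => true end.
Lemma isC_false k a : isC k = false -> inK k a -> a = RtoC (re a).
Proof. destruct k; simpl; intros; try discriminate. rewrite (Cx_eta a) at 1. rewrite H0. auto. Qed.
Lemma isC_true k a : isC k = true -> inK k a.
Proof. destruct k; simpl; intros; try discriminate. exact I. Qed.
Lemma inK_mulR k s z : inK k z -> inK k (Cmul (RtoC s) z).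
Proof. destruct k; simpl; auto. intro H; rewrite H; ring. Qed.

Section Cplx.
Context {k : field_kind} {X : Banach k}.

Lemma scal_decomp (a : Cx) (w : X) : isC k = true ->
  scal a w = vadd (sc (re a) w) (sc (im a) (scal Ci w)).
Proof.
  intro Hk. unfold sc.
  assert (inK k Ci) by (apply isC_true; auto).
  rewrite <- scal_mul by (auto; apply inK_RtoC).
  rewrite <- scal_adds by (first [apply inK_RtoC | apply isC_true; auto]).
  f_equal. rewrite (Cx_eta a) at 1. unfold Cadd, Cmul, RtoC, Ci; simpl. apply mkC_eq; ring.
Qed.

Lemma scal_CiCi (w : X) : isC k = true -> scal Ci (scal Ci w) = vopp w.
Proof.
  intro Hk. assert (inK k Ci) by (apply isC_true; auto).
  rewrite <- scal_mul by auto. rewrite vopp_sc. unfold sc. f_equal.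
  unfold Cmul, Ci, RtoC; simpl. apply mkC_eq; ring.
Qed.

Variable h : X -> R.
Hypotheses (hadd : forall x y, h (vadd x y) = h x + h y) (hsc : forall r x, h (sc r x) = r * h x)
  (hb : forall x, h x <= norm x).

Definition cplx (w : X) : Cx :=
  if isC k then mkC (h w) (- h (scal Ci w)) else RtoC (h w).

Lemma cplx_re w : re (cplx w) = h w.
Proof. unfold cplx. destruct (isC k); reflexivity. Qed.

Lemma cplx_add x y : cplx (vadd x y) = Cadd (cplx x) (cplx y).
Proof.
  unfold cplx. destruct (isC k) eqn:Hk.
  - unfold Cadd; simpl. rewrite scal_addv by (apply isC_true; auto). rewrite !hadd. apply mkC_eq; ring.
  - unfold Cadd, RtoC; simpl. rewrite hadd. apply mkC_eq; ring.
Qed.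

Lemma cplx_scal a x : inK k a -> cplx (scal a x) = Cmul a (cplx x).
Proof.
  intro Ha. unfold cplx. destruct (isC k) eqn:Hk.
  - assert (inK k Ci) by (apply isC_true; auto).
    rewrite <- (scal_mul Ci a) by auto.
    rewrite (scal_decomp a x), (scal_decomp (Cmul Ci a) x) by auto.
    rewrite !hadd, !hsc. unfold Cmul, Ci; simpl. apply mkC_eq; ring.
  - rewrite (isC_false k a Hk Ha). change (scal (RtoC (re a)) x) with (sc (re a) x).
    rewrite hsc. unfold Cmul, RtoC; simpl. apply mkC_eq; ring.
Qed.

Lemma h_opp x : h (vopp x) = - h x.
Proof. rewrite vopp_sc, hsc. ring. Qed.

Lemma h_sub x y : h (vsub x y) = h x - h y.
Proof. unfold vsub. rewrite hadd, h_opp. ring. Qed.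

Lemma h_abs x : Rabs (h x) <= norm x.
Proof. pose proof (hb x). pose proof (hb (vopp x)). rewrite h_opp, norm_opp in H0.
  unfold Rabs; destruct Rcase_abs; lra. Qed.

Lemma cplx_bound w : Cabs (cplx w) <= norm w.
Proof.
  destruct (isC k) eqn:Hk.
  2:{ unfold cplx. rewrite Hk, Cabs_RtoC. apply h_abs. }
  - set (z := cplx w). destruct (Req_dec (Cabs z) 0) as [H0|H0].
    { rewrite H0. apply norm_nonneg. }
    set (n := Cabs z). assert (Hn : 0 < n) by (pose proof (Cabs_nonneg z); unfold n; lra).
    set (a := mkC (re z / n) (- im z / n)).
    assert (Ha : Cabs a = 1).
    { unfold a, Cabs; simpl. replace (re z / n * (re z / n) + - im z / n * (- im z / n))
        with ((re z * re z + im z * im z) / (n * n)) by (field; lra).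
      unfold n. rewrite Cabs_sq. rewrite Rdiv_diag. apply sqrt_1.
      rewrite <- Cabs_sq. fold n. nra. }
    assert (inK k a) by (apply isC_true; auto).
    pose proof (cplx_scal a w H).
    assert (re (cplx (scal a w)) = n).
    { rewrite H1. fold z. unfold a, Cmul; simpl.
      replace (re z / n * re z - - im z / n * im z) with ((re z * re z + im z * im z) / n) by (field; lra).
      rewrite <- Cabs_sq. fold n. field. lra. }
    rewrite cplx_re in H2. pose proof (hb (scal a w)). rewrite norm_scal, Ha in H3 by auto. lra.
Qed.

Lemma cplx_dual : is_dual cplx.
Proof.
  split; [|split; [|split]].
  - intro x. unfold cplx. destruct (isC k) eqn:Hk; [apply isC_true; auto|apply inK_RtoC].
  - apply cplx_add.
  - intros a x Ha. apply cplx_scal; auto.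
  - exists 1. intro x. rewrite Rmult_1_l. apply cplx_bound.
Qed.

Lemma cplx_unit x0 : norm x0 = 1 -> h x0 = 1 -> cplx x0 = RtoC 1.
Proof.
  intros Hn Hh. rewrite (Cx_eta (cplx x0)). unfold RtoC. rewrite cplx_re, Hh. f_equal.
  apply Cabs_le_re_im0. rewrite cplx_re, Hh, <- Hn. apply cplx_bound.
Qed.

Lemma inD_scaled x0 s : norm x0 = 1 -> h x0 = 1 -> 0 < s ->
  inD (sc s x0) (fun w => Cmul (RtoC s) (cplx w)).
Proof.
  intros Hn Hh Hs. split; [split; [|split; [|split]]|].
  - intro x. apply inK_mulR. apply (proj1 cplx_dual x).
  - intros x y. rewrite cplx_add. unfold Cmul, Cadd, RtoC; simpl. apply mkC_eq; ring.
  - intros a x Ha. rewrite cplx_scal by auto. unfold Cmul, RtoC; simpl. apply mkC_eq; ring.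
  - exists s. intro x. rewrite Cabs_mul, Cabs_RtoC, Rabs_pos_eq by lra.
    apply Rmult_le_compat_l; [lra|]. apply cplx_bound.
  - exists s. split; [split|split].
    + intros r [x [Hx ->]]. rewrite Cabs_mul, Cabs_RtoC, Rabs_pos_eq by lra.
      pose proof (cplx_bound x). nra.
    + intros b Hb. assert (Cabs (Cmul (RtoC s) (cplx x0)) <= b) by (apply Hb; exists x0; split; auto; lra).
      rewrite cplx_unit in H by auto. rewrite Cabs_mul, !Cabs_RtoC, Rabs_pos_eq, Rabs_R1 in H by lra. lra.
    + change (sc s x0) with (scal (RtoC s) x0). rewrite cplx_scal by apply inK_RtoC.
      rewrite cplx_unit by auto. rewrite norm_scal, Cabs_RtoC, Rabs_pos_eq, Hn by (auto; try lra; apply inK_RtoC).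
      unfold Cmul, RtoC; simpl. apply mkC_eq; ring.
    + rewrite norm_sc, Rabs_pos_eq, Hn by lra. ring.
Qed.

End Cplx.

Section DualFacts.
Context {k : field_kind} {X : Banach k}.

Lemma dual_sc (f : X -> Cx) r x : is_dual f -> f (sc r x) = Cmul (RtoC r) (f x).
Proof. intros [_ [_ [H _]]]. apply H, inK_RtoC. Qed.

Lemma dual_bound (f : X -> Cx) : inSXs f -> forall w, Cabs (f w) <= norm w.
Proof.
  intros [Hd [Hub _]] w. destruct (Req_dec (norm w) 0) as [H0|H0].
  - apply norm_eq0 in H0. subst w.
    assert (f (vzero X) = Cmul (RtoC 0) (f (vzero X))) by (rewrite <- dual_sc, sc_0; auto).
    rewrite H, Cabs_mul, Cabs_RtoC, Rabs_R0, norm_zero. lra.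
  - pose proof (norm_nonneg w) as Hnn. set (n := norm w) in *.
    assert (Hn : 0 < n) by lra.
    assert (w = sc n (sc (/ n) w)) by (rewrite sc_mul, Rinv_r, sc_1 by lra; auto).
    rewrite H, dual_sc by auto. rewrite Cabs_mul, Cabs_RtoC, Rabs_pos_eq by lra.
    assert (Cabs (f (sc (/ n) w)) <= 1).
    { apply Hub. eexists; split; [|reflexivity]. rewrite norm_sc, Rabs_pos_eq.
      fold n. rewrite Rinv_l; lra. left. apply Rinv_0_lt_compat; auto. }
    nra.
Qed.

Definition psiF (f : X -> Cx) (a : Cx) (w : X) : R := re (Cmul (conjC a) (f w)).

Lemma psi_add f a x y : is_dual f -> psiF f a (vadd x y) = psiF f a x + psiF f a y.
Proof. intros [_ [H _]]. unfold psiF. rewrite H. unfold Cmul, Cadd, conjC; simpl. ring. Qed.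

Lemma psi_sc f a r x : is_dual f -> psiF f a (sc r x) = r * psiF f a x.
Proof. intro Hd. unfold psiF. rewrite dual_sc by auto. unfold Cmul, conjC, RtoC; simpl. ring. Qed.

Lemma psi_bound f a w : inSXs f -> Cabs a = 1 -> Rabs (psiF f a w) <= norm w.
Proof.
  intros Hf Ha. unfold psiF. eapply Rle_trans; [apply re_le_Cabs|].
  rewrite Cabs_mul, Cabs_conj, Ha, Rmult_1_l. apply dual_bound; auto.
Qed.

Lemma psi_rot f a x : is_dual f -> inT k a -> psiF f a (scal a x) = re (f x).
Proof.
  intros [_ [_ [H _]]] [Hk Ha]. unfold psiF. rewrite H by auto.
  apply Cabs_eq1 in Ha. unfold Cmul, conjC; simpl.
  replace (re a * (re a * re (f x) - im a * im (f x)) - - im a * (re a * im (f x) + im a * re (f x)))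
    with ((re a * re a + im a * im a) * re (f x)) by ring. rewrite Ha. ring.
Qed.

End DualFacts.


Section BP.
Context {k : field_kind} {X : Banach k}.
Variable psi : X -> R.
Hypotheses (padd : forall x y, psi (vadd x y) = psi x + psi y)
  (psc : forall r x, psi (sc r x) = r * psi x)
  (pb : forall w, Rabs (psi w) <= norm w).
Variable kk : R.
Hypothesis Hkk : 0 < kk.

Lemma psi_opp x : psi (vopp x) = - psi x.
Proof. rewrite vopp_sc, psc. ring. Qed.
Lemma psi_sub x y : psi (vsub x y) = psi x - psi y.
Proof. unfold vsub. rewrite padd, psi_opp. ring. Qed.
Lemma psi_le x : psi x <= norm x.
Proof. pose proof (pb x). pose proof (Rle_abs (psi x)). lra. Qed.
Lemma psi_ge x : - norm x <= psi x.
Proof. pose proof (pb x). pose proof (Rle_abs (- psi x)). rewrite Rabs_Ropp in H0. lra. Qed.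

Lemma psi_0 : psi (vzero X) = 0.
Proof. rewrite <- (sc_0 (vzero X)), psc. ring. Qed.

Definition prec (a b : X) := norm (vsub b a) <= kk * psi (vsub b a).

Lemma prec_refl a : prec a a.
Proof. unfold prec. rewrite vsub_self, norm_zero, psi_0. lra. Qed.

Lemma prec_trans a b c : prec a b -> prec b c -> prec a c.
Proof.
  unfold prec. intros H1 H2. rewrite psi_sub in *. pose proof (norm_tri_sub c b a). nra.
Qed.

Lemma prec_psi a b : prec a b -> psi a <= psi b.
Proof. unfold prec. intro H. rewrite psi_sub in H. pose proof (norm_nonneg (vsub b a)).
  assert (0 <= kk * (psi b - psi a)) by lra.
  destruct (Rle_dec (psi a) (psi b)); auto. nra. Qed.

Definition Aset (x y : X) := norm y <= 1 /\ prec x y.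

Lemma step_ex (n : nat) (x : X) : exists y, norm x <= 1 ->
  Aset x y /\ forall z, Aset x z -> psi z <= psi y + / INR (S n).
Proof.
  destruct (Rle_dec (norm x) 1) as [Hx|Hx]; [|exists x; intro; contradiction].
  destruct (completeness (fun r => exists z, Aset x z /\ r = psi z)) as [s [Hs1 Hs2]].
  { exists 1. intros r [z [[Hz _] ->]]. pose proof (psi_le z). lra. }
  { exists (psi x). exists x. split; auto. split; auto. apply prec_refl. }
  assert (Hpos : 0 < / INR (S n)) by (apply Rinv_0_lt_compat, lt_0_INR; lia).
  destruct (classic (exists z, Aset x z /\ s - / INR (S n) < psi z)) as [[z [Hz Hz']]|Hno].
  - exists z. intros _. split; auto. intros z' Hz''.
    assert (psi z' <= s) by (apply Hs1; eauto). lra.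
  - exfalso. assert (s <= s - / INR (S n)); [|lra].
    apply Hs2. intros r [z [Hz ->]]. destruct (Rle_dec (psi z) (s - / INR (S n))); auto.
    exfalso. apply Hno. exists z. split; auto. lra.
Qed.

Definition stepf (n : nat) (x : X) : X := proj1_sig (constructive_indefinite_description _ (step_ex n x)).

Lemma stepf_spec n x : norm x <= 1 ->
  Aset x (stepf n x) /\ forall z, Aset x z -> psi z <= psi (stepf n x) + / INR (S n).
Proof. apply (proj2_sig (constructive_indefinite_description _ (step_ex n x))). Qed.

Variable z0 : X.
Hypothesis Hz0 : norm z0 <= 1.

Fixpoint xs (n : nat) : X := match n with O => z0 | S n => stepf n (xs n) end.

Lemma xs_ball n : norm (xs n) <= 1.
Proof. induction n; simpl; auto. apply (stepf_spec n _ IHn). Qed.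

Lemma xs_prec_S n : prec (xs n) (xs (S n)).
Proof. simpl. apply (stepf_spec n _ (xs_ball n)). Qed.

Lemma xs_prec n m : (n <= m)%nat -> prec (xs n) (xs m).
Proof.
  induction 1. apply prec_refl. eapply prec_trans; eauto. apply xs_prec_S.
Qed.

Lemma xs_opt n z : Aset (xs (S n)) z -> psi z <= psi (xs (S n)) + / INR (S n).
Proof.
  intros [Hz Hp]. simpl. apply (stepf_spec n _ (xs_ball n)). split; auto.
  eapply prec_trans; [|apply Hp]. apply xs_prec_S.
Qed.

Lemma xs_cauchy n m : (1 <= n)%nat -> (n <= m)%nat -> norm (vsub (xs m) (xs n)) <= kk / INR n.
Proof.
  intros H1 H2. destruct n as [|j]; [lia|].
  pose proof (xs_prec _ _ H2) as Hp. unfold prec in Hp. rewrite psi_sub in Hp.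
  assert (psi (xs m) <= psi (xs (S j)) + / INR (S j)).
  { apply xs_opt. split; [apply xs_ball|apply xs_prec; auto]. }
  unfold Rdiv. nra.
Qed.

Theorem bishop_phelps : exists x0, norm x0 <= 1 /\ prec z0 x0 /\
  forall y, norm y <= 1 -> prec x0 y -> y = x0.
Proof.
  destruct (complete xs) as [L HL].
  { intros eps He. destruct (archimed_cor1 (eps / kk)) as [N [HN1 HN2]].
    { apply Rdiv_lt_0_compat; auto. }
    exists N. intros n m Hn Hm.
    assert (HNp : 0 < INR N) by (apply lt_0_INR; lia).
    assert (kk / INR N < eps).
    { apply (Rmult_lt_compat_l kk) in HN1; auto. unfold Rdiv in *.
      replace (kk * (eps * / kk)) with eps in HN1 by (field; lra). lra. }
    assert (Hmono : forall j, (N <= j)%nat -> kk / INR j <= kk / INR N).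
    { intros j Hj. unfold Rdiv. apply Rmult_le_compat_l; [lra|]. apply Rinv_le_contravar; auto.
      apply le_INR; auto. }
    change (vadd (xs n) (vopp (xs m))) with (vsub (xs n) (xs m)).
    destruct (Nat.le_ge_cases n m) as [Hnm|Hnm].
    - rewrite norm_sub_sym. pose proof (xs_cauchy n m ltac:(lia) Hnm). pose proof (Hmono n Hn). lra.
    - pose proof (xs_cauchy m n ltac:(lia) Hnm). pose proof (Hmono m Hm). lra. }
  assert (HL' : forall eps, 0 < eps -> exists N, forall n, (N <= n)%nat -> norm (vsub (xs n) L) < eps) by exact HL.
  assert (HLb : norm L <= 1).
  { apply le_eps. intros e He. destruct (HL' e He) as [N HN]. specialize (HN N (le_n N)).
    pose proof (norm_tri_sub L (xs N) (vzero X)). rewrite !vsub_0, norm_sub_sym in H.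
    pose proof (xs_ball N). lra. }
  assert (HLp : forall n, prec (xs n) L).
  { intro n. unfold prec. apply le_eps. intros e He.
    destruct (HL' (e / (1 + kk))) as [N HN]. { apply Rdiv_lt_0_compat; lra. }
    set (m := Nat.max n N). specialize (HN m ltac:(lia)).
    pose proof (xs_prec n m ltac:(lia)) as Hp. unfold prec in Hp.
    pose proof (norm_tri_sub L (xs m) (xs n)).
    rewrite (norm_sub_sym L (xs m)) in H.
    pose proof (psi_le (vsub (xs m) L)). rewrite !psi_sub in *.
    assert ((1 + kk) * (e / (1 + kk)) = e) by (field; lra).
    nra. }
  exists L. split; auto. split. apply (HLp 0%nat).
  intros y Hy Hpy.
  assert (Hpsi : psi y - psi L <= 0).
  { apply le_eps. intros e He. destruct (archimed_cor1 e He) as [N [HN1 HN2]].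
    destruct N as [|j]; [lia|].
    assert (psi y <= psi (xs (S j)) + / INR (S j)).
    { apply xs_opt. split; auto. eapply prec_trans; [apply HLp|auto]. }
    pose proof (prec_psi _ _ (HLp (S j))). lra. }
  unfold prec in Hpy. rewrite psi_sub in Hpy. apply vsub_eq0, norm_eq0.
  pose proof (norm_nonneg (vsub y L)). nra.
Qed.

End BP.


Lemma Rdiv_le_0_compat' a b : 0 <= a -> 0 < b -> 0 <= a / b.
Proof. intros. unfold Rdiv. apply Rmult_le_pos; auto. left; apply Rinv_0_lt_compat; auto. Qed.

Section BPB.
Context {k : field_kind} {X : Banach k}.

Lemma norm_sub_le (a b : X) : norm (vsub a b) <= norm a + norm b.
Proof. unfold vsub. rewrite <- (norm_opp b). apply norm_triangle. Qed.

Lemma norm_sublin : sublin (@norm k X).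
Proof. split. apply norm_triangle. intros r x Hr. rewrite norm_sc, Rabs_pos_eq; auto. Qed.

Theorem bpb (psi : X -> R)
  (padd : forall x y, psi (vadd x y) = psi x + psi y)
  (psc : forall r x, psi (sc r x) = r * psi x)
  (pb : forall w, Rabs (psi w) <= norm w)
  (kk eps : R) (Hkk : 4 <= kk) (He : 0 < eps) (He' : eps <= 1/4)
  (z0 : X) (Hz0 : norm z0 <= 1) (Hpz : psi z0 > 1 - eps) :
  exists (x0 : X) (h : X -> R), norm x0 = 1 /\ norm (vsub x0 z0) <= kk * eps /\
    (forall x y, h (vadd x y) = h x + h y) /\ (forall r x, h (sc r x) = r * h x) /\
    (forall x, h x <= norm x) /\ h x0 = 1 /\
    (forall w, Rabs (h w - psi w) <= (6 / (kk - 2) + 2 * eps) * norm w).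
Proof.
  assert (Hk0 : 0 < kk) by lra.
  destruct (bishop_phelps psi padd psc pb kk Hk0 z0 Hz0) as [x0 [Hx0b [Hzx Hmax]]].
  pose proof (psi_le psi pb x0) as Hpx0.
  pose proof (prec_psi psi padd psc kk Hk0 _ _ Hzx) as Hpzx.
  assert (Hdist : norm (vsub x0 z0) <= kk * eps).
  { unfold prec in Hzx. rewrite (psi_sub psi padd psc) in Hzx. nra. }
  assert (Hn1 : norm x0 = 1).
  { destruct (Rle_lt_or_eq_dec _ _ Hx0b) as [Hlt|]; auto. exfalso.
    set (t := 1 - norm x0). assert (Ht : 0 < t) by (unfold t; lra).
    set (y := vadd x0 (sc t z0)).
    assert (Hy : norm y <= 1).
    { pose proof (norm_triangle x0 (sc t z0)). rewrite norm_sc, Rabs_pos_eq in H by lra. unfold y, t in *. nra. }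
    assert (Hp : prec psi kk x0 y).
    { unfold prec, y. rewrite vsub_addl, norm_sc, psc. rewrite (Rabs_pos_eq t) by lra. assert (1 <= kk * psi z0) by nra. assert (t * norm z0 <= t) by nra. nra. }
    specialize (Hmax y Hy Hp). assert (vsub y x0 = vzero X) by (rewrite Hmax; apply vsub_self).
    unfold y in H. rewrite vsub_addl in H. assert (psi (sc t z0) = 0) by (rewrite H; apply psi_0; auto).
    rewrite psc in H0. nra. }
  set (Kc := fun c : X => norm c <= kk * psi c).
  set (l0 := fun _ : X => 0).
  assert (C0 : Kc (vzero X)) by (unfold Kc; rewrite norm_zero, psi_0 by auto; lra).
  assert (Cadd : forall a b, Kc a -> Kc b -> Kc (vadd a b)).
  { unfold Kc. intros a b Ha Hb. rewrite padd. pose proof (norm_triangle a b). lra. }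
  assert (Csc : forall r a, 0 <= r -> Kc a -> Kc (sc r a)).
  { unfold Kc. intros r a Hr Ha. rewrite norm_sc, psc, Rabs_pos_eq by auto. nra. }
  assert (ladd : forall a b, Kc a -> Kc b -> l0 (vadd a b) = l0 a + l0 b) by (intros; unfold l0; ring).
  assert (lsc : forall r a, 0 <= r -> Kc a -> l0 (sc r a) = r * l0 a) by (intros; unfold l0; ring).
  assert (lp : forall a, Kc a -> l0 a <= norm a) by (intros; unfold l0; apply norm_nonneg).
  set (p := qinf norm Kc l0).
  assert (Hps : sublin p) by (apply qinf_sublin; auto; apply norm_sublin).
  assert (Hpx : 1 <= p x0).
  { apply (proj2 (qinf_spec norm Kc l0 norm_sublin C0 lp x0)).
    intros e [c [Hc ->]]. unfold l0. destruct (Rle_dec 1 (norm (vadd x0 c))) as [|Hn]; [lra|].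
    exfalso. assert (Hy : norm (vadd x0 c) <= 1) by lra.
    assert (Hp : prec psi kk x0 (vadd x0 c)) by (unfold prec; rewrite vsub_addl; auto).
    specialize (Hmax _ Hy Hp). rewrite Hmax in Hn. lra. }
  assert (Hple : forall x, p x <= norm x) by (intro; apply qinf_lep; auto; apply norm_sublin).
  destruct (hahn_banach p x0 Hps) as [h [hadd [hsc [hp hx0]]]].
  assert (hb : forall x, h x <= norm x) by (intro x; pose proof (hp x); pose proof (Hple x); lra).
  assert (Hh1 : h x0 = 1) by (pose proof (hb x0); lra).
  assert (hopp : forall x, h (vopp x) = - h x) by (intro; rewrite vopp_sc, hsc; ring).
  assert (hK : forall c, Kc c -> 0 <= h c).
  { intros c Hc. pose proof (hp (vopp c)).
    assert (p (vopp c) <= - l0 c) by (apply qinf_opp; auto; apply norm_sublin).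
    unfold l0 in H0. rewrite hopp in H. lra. }
  exists x0, h. split; auto. split; auto. split; auto. split; auto. split; auto. split; auto.
  intro w. set (b := psi x0). assert (Hb1 : 3/4 <= b) by (unfold b; lra). assert (Hb2 : b <= 1) by (unfold b; lra).
  assert (Hbe : 1 - eps < b) by (unfold b; lra).
  set (N := norm w). set (pw := psi w).
  set (w' := vsub w (sc (pw / b) x0)).
  assert (Hpw' : psi w' = 0).
  { unfold w'. rewrite (psi_sub psi padd psc), psc. fold b. unfold pw. field. lra. }
  assert (Hhw' : h w' = h w - pw / b).
  { unfold w'. unfold vsub. rewrite hadd, hopp, hsc, Hh1. ring. }
  assert (HpwN : Rabs pw <= N) by apply pb.
  assert (Hnw' : norm w' <= N + N / b).
  { unfold w'. pose proof (norm_sub_le w (sc (pw / b) x0)). rewrite norm_sc, Hn1 in H.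
    unfold Rdiv in H. rewrite Rabs_mult, (Rabs_pos_eq (/ b)) in H by (left; apply Rinv_0_lt_compat; lra).
    fold N in H. change (Rabs pw * / b) with (Rabs pw / b) in H.
    assert (Rabs pw / b <= N / b) by (unfold Rdiv; apply Rmult_le_compat_r; [left; apply Rinv_0_lt_compat; lra|auto]).
    lra. }
  set (t := norm w' / (kk * b - 1)).
  assert (Hden : 2 <= kk * b - 1) by nra.
  assert (Ht0 : 0 <= t) by (unfold t; apply Rdiv_le_0_compat'; [apply norm_nonneg|lra]).
  assert (Htkey : norm w' + t = kk * (t * b)) by (unfold t; field; lra).
  assert (HK1 : Kc (vadd w' (sc t x0))).
  { unfold Kc. rewrite padd, psc, Hpw'. fold b. pose proof (norm_triangle w' (sc t x0)).
    rewrite norm_sc, Hn1, Rabs_pos_eq in H by auto. lra. }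
  assert (HK2 : Kc (vadd (vopp w') (sc t x0))).
  { unfold Kc. rewrite padd, psc, (psi_opp psi psc), Hpw'. fold b. pose proof (norm_triangle (vopp w') (sc t x0)).
    rewrite norm_sc, norm_opp, Hn1, Rabs_pos_eq in H by auto. lra. }
  apply hK in HK1. apply hK in HK2. rewrite hadd, hsc, Hh1 in HK1, HK2. rewrite hopp in HK2.
  assert (HD : Rabs (h w - pw / b) <= t) by (rewrite <- Hhw'; unfold Rabs; destruct Rcase_abs; lra).
  assert (HNb : N / b <= 4/3 * N).
  { assert (0 <= N) by apply norm_nonneg. unfold Rdiv. apply (Rmult_le_reg_l b); [lra|].
    replace (b * (N * / b)) with N by (field; lra). nra. }
  assert (Ht : t <= 14 / 3 * N / (kk - 2)).
  { unfold t. assert (0 <= N) by apply norm_nonneg.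
    apply (Rmult_le_reg_l ((kk * b - 1) * (kk - 2))); [nra|].
    replace ((kk * b - 1) * (kk - 2) * (norm w' / (kk * b - 1))) with ((kk - 2) * norm w') by (field; lra).
    replace ((kk * b - 1) * (kk - 2) * (14 / 3 * N / (kk - 2))) with ((kk * b - 1) * (14 / 3 * N)) by (field; lra).
    assert (norm w' <= 7/3 * N) by lra.
    assert (kk - 2 <= 2 * (kk * b - 1)) by nra. nra. }
  assert (Hrest : Rabs (pw / b - pw) <= 2 * eps * N).
  { replace (pw / b - pw) with (pw * ((1 - b) / b)) by (field; lra).
    rewrite Rabs_mult. assert (0 <= (1 - b) / b) by (apply Rdiv_le_0_compat'; lra).
    rewrite (Rabs_pos_eq ((1 - b)/b)) by auto.
    assert ((1 - b) / b <= 2 * eps).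
    { apply (Rmult_le_reg_l b); [lra|]. replace (b * ((1 - b) / b)) with (1 - b) by (field; lra).
      assert (3/2*eps <= b*(2*eps)) by nra. lra. }
    assert (0 <= Rabs pw) by apply Rabs_pos. nra. }
  assert (Hfin : 14 / 3 * N / (kk - 2) <= 6 / (kk - 2) * N).
  { assert (0 <= N) by apply norm_nonneg. unfold Rdiv.
    assert (0 < / (kk - 2)) by (apply Rinv_0_lt_compat; lra). nra. }
  replace (h w - pw) with ((h w - pw / b) + (pw / b - pw)) by ring.
  eapply Rle_trans; [apply Rabs_triang|]. fold N. lra.
Qed.

End BPB.


Section Main.
Context {k : field_kind} {X : Banach k}.

Lemma norm_scal_T (al : Cx) (v : X) : inT k al -> norm (scal al v) = norm v.
Proof. intros [Hk Ha]. rewrite norm_scal, Ha by auto. ring. Qed.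

Lemma KL (T : X -> X) (Lip : forall x y, norm (vsub (T x) (T y)) <= norm (vsub x y))
  (psi : X -> R)
  (padd : forall x y, psi (vadd x y) = psi x + psi y)
  (psc : forall r x, psi (sc r x) = r * psi x)
  (pb : forall w, Rabs (psi w) <= norm w)
  (al : Cx) (Hal : inT k al)
  (kk eps : R) (Hkk : 4 <= kk) (He : 0 < eps) (He' : eps <= 1/4)
  (z0 : X) (Hz0 : norm z0 <= 1) (Hpz : psi z0 > 1 - eps)
  (a : X) (s : R) (Hs : 0 < s) (eta : R)
  (Hseg : s * (1 - eta) <= psi (scal al (vsub (T (vadd a (sc s z0))) (T a)))) :
  exists x y (f : X -> Cx), x <> y /\ inD (vsub x y) f /\
    1 - eta - kk * eps - (6 / (kk - 2) + 2 * eps) <=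
      Cabs (f (vsub (T x) (T y))) / (norm (vsub x y)) ^ 2.
Proof.
  destruct (bpb psi padd psc pb kk eps Hkk He He' z0 Hz0 Hpz)
    as [x0 [h [Hn1 [Hdist [hadd [hsc [hb [Hh1 Hclose]]]]]]]].
  set (b := vadd a (sc s z0)) in *.
  set (x := vadd a (sc s x0)).
  exists x, a, (fun w => Cmul (RtoC s) (cplx h w)).
  assert (Hxa : vsub x a = sc s x0) by (unfold x; apply vsub_addl).
  assert (Hnxa : norm (vsub x a) = s) by (rewrite Hxa, norm_sc, Hn1, Rabs_pos_eq; lra).
  split; [|split].
  - intro Heq. rewrite Heq, vsub_self, norm_zero in Hnxa. lra.
  - rewrite Hxa. apply inD_scaled; auto.
  - rewrite Hnxa. set (v := vsub (T x) (T a)).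
    rewrite Cabs_mul, Cabs_RtoC, Rabs_pos_eq by lra.
    assert (Hal1 : Cabs al = 1) by apply Hal.
    assert (H1 : h (scal al v) <= Cabs (cplx h v)).
    { rewrite <- (Rmult_1_l (Cabs (cplx h v))), <- Hal1, <- Cabs_mul.
      rewrite <- cplx_scal by (auto; apply Hal). rewrite <- (cplx_re h (scal al v)). apply re_le_Cabs'. }
    assert (H2 : psi (scal al v) - (6 / (kk - 2) + 2 * eps) * norm v <= h (scal al v)).
    { pose proof (Hclose (scal al v)). rewrite norm_scal_T in H by auto.
      pose proof (Rle_abs (psi (scal al v) - h (scal al v))). rewrite Rabs_minus_sym in H0. lra. }
    assert (Hnv : norm v <= s) by (rewrite <- Hnxa; apply Lip).
    assert (Hcoef : 0 <= 6 / (kk - 2) + 2 * eps).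
    { assert (0 < 6 / (kk - 2)) by (apply Rdiv_lt_0_compat; lra). lra. }
    assert (H3 : psi (scal al v) >= s * (1 - eta) - s * (kk * eps)).
    { unfold v. rewrite (vsub_chain (T a) (T b) (T x)). rewrite scal_addv by apply Hal.
      rewrite padd. 
      assert (- norm (vsub (T x) (T b)) <= psi (scal al (vsub (T x) (T b)))).
      { pose proof (pb (scal al (vsub (T x) (T b)))). rewrite norm_scal_T in H by auto.
        pose proof (Rle_abs (- psi (scal al (vsub (T x) (T b))))). rewrite Rabs_Ropp in H0. lra. }
      assert (norm (vsub x b) <= s * (kk * eps)).
      { unfold x, b. rewrite vsub_addcancel, <- sc_sub, norm_sc, Rabs_pos_eq by lra.
        apply Rmult_le_compat_l; lra. }
      pose proof (Lip x b). lra. }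
    assert (Hfin : s * (1 - eta - kk * eps - (6 / (kk - 2) + 2 * eps)) <= Cabs (cplx h v)).
    { assert ((6 / (kk - 2) + 2 * eps) * norm v <= (6 / (kk - 2) + 2 * eps) * s)
        by (apply Rmult_le_compat_l; auto). nra. }
    apply (Rmult_le_reg_l (s ^ 2)); [nra|].
    replace (s ^ 2 * (s * Cabs (cplx h v) / s ^ 2)) with (s * Cabs (cplx h v)) by (field; lra).
    replace (s ^ 2 * (1 - eta - kk * eps - (6 / (kk - 2) + 2 * eps)))
      with (s * (s * (1 - eta - kk * eps - (6 / (kk - 2) + 2 * eps)))) by ring.
    apply Rmult_le_compat_l; lra.
Qed.

Lemma inD_ratio (d : X) (f : X -> Cx) : d <> vzero X -> inD d f -> Cabs (f d) / (norm d) ^ 2 = 1.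
Proof.
  intros Hd [_ [c [_ [Hf Hc]]]]. rewrite Hf, Cabs_RtoC, Hc.
  pose proof (norm_pos d Hd). rewrite Rabs_pos_eq by nra. field. lra.
Qed.

Lemma upper_part : (exists x : X, x <> vzero X) ->
  exists T : X -> X, T (vzero X) = vzero X /\ lip_norm T 1 /\ omega T 1.
Proof.
  intros [e He]. pose proof (norm_pos e He) as Hne.
  set (e1 := sc (/ norm e) e).
  assert (Hn1 : norm e1 = 1).
  { unfold e1. rewrite norm_sc, Rabs_pos_eq. field. lra. left. apply Rinv_0_lt_compat; auto. }
  assert (He1 : e1 <> vzero X) by (intro H; rewrite H, norm_zero in Hn1; lra).
  destruct (hahn_banach norm e1 norm_sublin) as [h [hadd [hsc [hb hx0]]]].
  rewrite Hn1 in hx0.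
  pose proof (inD_scaled h hadd hsc hb e1 1 Hn1 hx0 Rlt_0_1) as HD.
  rewrite sc_1 in HD.
  exists (fun x => x). split; [auto|split].
  - split.
    + intros r [x [y [Hxy ->]]]. assert (vsub x y <> vzero X) by (intro H; apply Hxy, vsub_eq0; auto).
      pose proof (norm_pos _ H). right. field. lra.
    + intros b Hb. apply Hb. exists e1, (vzero X). split; auto. rewrite vsub_0. field. lra.
  - split.
    + intros r [x [y [f [Hxy [Hf ->]]]]]. assert (vsub x y <> vzero X) by (intro H; apply Hxy, vsub_eq0; auto).
      rewrite inD_ratio; auto. lra.
    + intros b Hb. apply Hb. exists e1, (vzero X), (fun w => Cmul (RtoC 1) (cplx h w)).
      split; auto. rewrite vsub_0. split; auto.
      pose proof (inD_ratio _ _ He1 HD) as HR. cbv beta in HR. lra.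
Qed.

Lemma lower_part (Hjl : join_lush X) (T : X -> X) (w : R) :
  lip_norm T 1 -> omega T w -> 1 <= w.
Proof.
  intros [Hlub Hlle] [Houb _].
  destruct (Rle_dec 1 w) as [|Hw]; auto. exfalso.
  set (dl := 1 - w). assert (Hdl : 0 < dl) by (unfold dl; lra).
  assert (Lip : forall x y, norm (vsub (T x) (T y)) <= norm (vsub x y)).
  { intros x y. destruct (classic (x = y)) as [->|Hxy].
    - rewrite !vsub_self. lra.
    - assert (vsub x y <> vzero X) by (intro H; apply Hxy, vsub_eq0; auto).
      pose proof (norm_pos _ H).
      assert (norm (vsub (T x) (T y)) / norm (vsub x y) <= 1) by (apply Hlub; exists x, y; auto).
      apply (Rmult_le_compat_l (norm (vsub x y))) in H1; [|lra].
      replace (norm (vsub x y) * (norm (vsub (T x) (T y)) / norm (vsub x y))) with (norm (vsub (T x) (T y))) in H1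
        by (field; lra). lra. }
  set (kk := 4 + 12 / dl).
  assert (Hkk : 4 <= kk) by (unfold kk; assert (0 < 12 / dl) by (apply Rdiv_lt_0_compat; lra); lra).
  assert (Hk6 : 6 / (kk - 2) <= dl / 2).
  { unfold kk. apply (Rmult_le_reg_l (2 + 12 / dl)). assert (0 < 12/dl) by (apply Rdiv_lt_0_compat; lra). lra.
    replace (2 + 12 / dl) with (4 + 12 / dl - 2) by ring.
    replace ((4 + 12 / dl - 2) * (6 / (4 + 12 / dl - 2))) with 6 by (field; split; [lra|]; assert (0 < 12/dl) by (apply Rdiv_lt_0_compat; lra); lra).
    replace ((4 + 12 / dl - 2) * (dl / 2)) with (dl + 6) by (field; lra). lra. }
  set (eps := Rmin (1/4) (dl / (4 * (8 + kk)))).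
  assert (He : 0 < eps) by (unfold eps; apply Rmin_pos; [lra|apply Rdiv_lt_0_compat; lra]).
  assert (He' : eps <= 1/4) by (unfold eps; apply Rmin_l).
  assert (He'' : (8 + kk) * eps <= dl / 4).
  { assert (eps <= dl / (4 * (8 + kk))) by (unfold eps; apply Rmin_r).
    apply (Rmult_le_compat_l (8 + kk)) in H; [|lra].
    replace ((8 + kk) * (dl / (4 * (8 + kk)))) with (dl / 4) in H by (field; lra). lra. }
  assert (Huv : exists u v, u <> v /\ 1 - eps < norm (vsub (T u) (T v)) / norm (vsub u v)).
  { apply NNPP. intro Hno. assert (1 <= 1 - eps); [|lra].
    apply Hlle. intros r [u [v [Huv ->]]]. destruct (Rle_dec (norm (vsub (T u) (T v)) / norm (vsub u v)) (1 - eps)); auto.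
    exfalso. apply Hno. exists u, v. split; auto. lra. }
  destruct Huv as [u [v [Huv Hrat]]].
  assert (Hd : vsub u v <> vzero X) by (intro H; apply Huv, vsub_eq0; auto).
  set (r := norm (vsub u v)). assert (Hr : 0 < r) by (apply norm_pos; auto).
  set (rho := norm (vsub (T u) (T v))).
  assert (Hrho : (1 - eps) * r < rho).
  { fold r rho in Hrat. apply (Rmult_lt_compat_l r) in Hrat; auto.
    replace (r * (rho / r)) with rho in Hrat by (field; lra). lra. }
  assert (Hrho0 : 0 < rho) by nra.
  set (xx := sc (/ r) (vsub u v)). set (yy := sc (/ rho) (vsub (T u) (T v))).
  assert (Hxx : inSX xx).
  { unfold inSX, xx. rewrite norm_sc, Rabs_pos_eq. fold r. field. lra. left. apply Rinv_0_lt_compat; auto. }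
  assert (Hyy : inSX yy).
  { unfold inSX, yy. rewrite norm_sc, Rabs_pos_eq. fold rho. field. lra. left. apply Rinv_0_lt_compat; auto. }
  destruct (Hjl xx yy Hxx Hyy eps He) as [ys [Hys [[_ Hsly] [x1 [x2 [lam [a1 [a2 [Hs1 [Hs2 [Hlam [Ha1 [Ha2 Hnorm]]]]]]]]]]]]].
  destruct Hs1 as [Hx1n Hx1r]. destruct Hs2 as [Hx2n Hx2r].
  assert (Hdual : is_dual ys) by apply Hys.
  set (reY := fun w => re (ys w)).
  assert (rY_add : forall a b, reY (vadd a b) = reY a + reY b).
  { intros. unfold reY. rewrite (proj1 (proj2 Hdual)). reflexivity. }
  assert (rY_sc : forall c a, reY (sc c a) = c * reY a).
  { intros. unfold reY. rewrite dual_sc by auto. unfold Cmul, RtoC; simpl. ring. }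
  assert (rY_b : forall a, reY a <= norm a).
  { intro a. unfold reY. pose proof (re_le_Cabs' (ys a)). pose proof (dual_bound ys Hys a). lra. }
  assert (HTuv : vsub (T u) (T v) = sc rho yy).
  { unfold yy. rewrite sc_mul, Rinv_r, sc_1 by lra. auto. }
  assert (HreTuv : rho * (1 - eps) < reY (vsub (T u) (T v))).
  { rewrite HTuv, rY_sc. unfold reY. apply Rmult_lt_compat_l; auto. }
  set (A1 := scal a1 x1). set (A2 := scal a2 x2).
  assert (HA1 : norm A1 <= 1) by (unfold A1; rewrite norm_scal_T; auto).
  assert (HA2 : norm A2 <= 1) by (unfold A2; rewrite norm_scal_T; auto).
  set (p1 := vadd v (sc (r * lam) A1)). set (p2 := vadd p1 (sc (r * (1 - lam)) A2)).
  assert (Hu : u = vadd v (sc r xx)).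
  { unfold xx. rewrite sc_mul, Rinv_r, sc_1 by lra. symmetry. apply vadd_sub. }
  assert (Hp2u : norm (vsub p2 u) < r * eps).
  { change (scal (RtoC lam) (scal a1 x1)) with (sc lam A1) in Hnorm.
    change (scal (RtoC (1 - lam)) (scal a2 x2)) with (sc (1 - lam) A2) in Hnorm.
    assert (vsub p2 u = sc r (vsub (vadd (sc lam A1) (sc (1 - lam) A2)) xx)).
    { unfold p2, p1. rewrite Hu. rewrite <- vadd_assoc, vsub_addcancel.
      rewrite sc_sub, sc_addv, !sc_mul. auto. }
    rewrite H, norm_sc, Rabs_pos_eq, norm_sub_sym by lra.
    apply Rmult_lt_compat_l; auto. }
  assert (E1 : reY (vsub (T u) (T v)) = reY (vsub (T u) (T p2)) + reY (vsub (T p2) (T p1)) + reY (vsub (T p1) (T v))).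
  { rewrite (vsub_chain (T v) (T p2) (T u)), (vsub_chain (T v) (T p1) (T p2)), !rY_add. ring. }
  assert (B1 : reY (vsub (T u) (T p2)) <= r * eps).
  { pose proof (rY_b (vsub (T u) (T p2))). pose proof (Lip u p2). rewrite norm_sub_sym in Hp2u. lra. }
  assert (B2 : reY (vsub (T p1) (T v)) <= r * lam).
  { pose proof (rY_b (vsub (T p1) (T v))). pose proof (Lip p1 v).
    assert (norm (vsub p1 v) <= r * lam).
    { unfold p1. rewrite vsub_addl, norm_sc, Rabs_pos_eq by nra. rewrite <- Rmult_1_r. apply Rmult_le_compat_l; nra. }
    lra. }
  assert (B3 : reY (vsub (T p2) (T p1)) <= r * (1 - lam)).
  { pose proof (rY_b (vsub (T p2) (T p1))). pose proof (Lip p2 p1).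
    assert (norm (vsub p2 p1) <= r * (1 - lam)).
    { unfold p2. rewrite vsub_addl, norm_sc, Rabs_pos_eq by nra. rewrite <- Rmult_1_r. apply Rmult_le_compat_l; nra. }
    lra. }
  assert (Hrho2 : (1 - eps) * (1 - eps) * r <= rho * (1 - eps)) by nra.
  assert (Hsum : r * (1 - 3 * eps) <= reY (vsub (T p2) (T p1)) + reY (vsub (T p1) (T v))) by nra.
  assert (Hgoal : exists x y (f : X -> Cx), x <> y /\ inD (vsub x y) f /\
      1 - 6 * eps - kk * eps - (6 / (kk - 2) + 2 * eps) <= Cabs (f (vsub (T x) (T y))) / (norm (vsub x y)) ^ 2).
  { destruct (Rle_dec (1/2) lam) as [Hl|Hl].
    - assert (Hz : psiF ys a1 A1 > 1 - eps) by (unfold A1; rewrite psi_rot by auto; lra).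
      assert (Hs : 0 < r * lam) by nra.
      assert (Hseg : r * lam * (1 - 6 * eps) <= psiF ys a1 (scal a1 (vsub (T (vadd v (sc (r * lam) A1))) (T v)))).
      { fold p1. rewrite psi_rot by auto. fold (reY (vsub (T p1) (T v))). nra. }
      exact (KL T Lip (psiF ys a1) (fun x y => psi_add ys a1 x y Hdual) (fun c x => psi_sc ys a1 c x Hdual)
        (fun w => psi_bound ys a1 w Hys (proj2 Ha1)) a1 Ha1 kk eps Hkk He He' A1 HA1 Hz v (r * lam) Hs (6 * eps) Hseg).
    - assert (Hz : psiF ys a2 A2 > 1 - eps) by (unfold A2; rewrite psi_rot by auto; lra).
      assert (Hs : 0 < r * (1 - lam)) by nra.
      assert (Hseg : r * (1 - lam) * (1 - 6 * eps) <= psiF ys a2 (scal a2 (vsub (T (vadd p1 (sc (r * (1 - lam)) A2))) (T p1)))).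
      { fold p2. rewrite psi_rot by auto. fold (reY (vsub (T p2) (T p1))). nra. }
      exact (KL T Lip (psiF ys a2) (fun x y => psi_add ys a2 x y Hdual) (fun c x => psi_sc ys a2 c x Hdual)
        (fun w => psi_bound ys a2 w Hys (proj2 Ha2)) a2 Ha2 kk eps Hkk He He' A2 HA2 Hz p1 (r * (1 - lam)) Hs (6 * eps) Hseg). }
  destruct Hgoal as [x [y [f [Hxy [Hf Hratio]]]]].
  assert (Cabs (f (vsub (T x) (T y))) / (norm (vsub x y)) ^ 2 <= w) by (apply Houb; exists x, y, f; auto).
  assert (dl = 1 - w) by reflexivity. lra.
Qed.

End Main.

Theorem mainTheorem7 (k : field_kind) (X : Banach k) :
  (exists x : X, x <> vzero X) ->
  join_lush X -> nL X 1.
Proof.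
  intros Hne Hjl. split.
  - intros w [T [HT0 [Hl Hw]]]. apply (lower_part Hjl T w Hl Hw).
  - intros b Hb. destruct (upper_part Hne) as [T [HT0 [Hl Hw]]]. apply Hb. exists T. auto.
Qed.
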